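(* Let $\Gamma$ be a Coxeter graph with Coxeter matrix $M=(m_{s,t})_{s,t\in S}$. Let $u,v\in W[\Gamma]$ and $s,t\in S$. If $u(\alpha_s)=v(\alpha_t)$ in $V$, then $u\cdot\sigma_s=v\cdot\sigma_t$ in $KVA[\Gamma]$ and $u\cdot(\tau_s\sigma_s)=v\cdot(\tau_t\sigma_t)$ in $PVA[\Gamma]$.
   Context: A Coxeter matrix on a countable set $S$ is a symmetric matrix $M=(m_{s,t})_{s,t\in S}$ with entries in $\mathbb{N}\cup\{\infty\}$ such that $m_{s,s}=1$ for all $s$ and $m_{s,t}=m_{t,s}\ge 2$ for $s\neq t$; it is encoded by a Coxeter graph $\Gamma$ with vertex set $S$ ($\Gamma$ is called finite if $S$ is finite). For letters $a,b$ and an integer $m\ge 2$, $\Pi_L(a,b,m)$ denotes the alternating word $aba\cdots$ of length $m$ beginning with $a$, and $\Pi_R(b,a,m)$ denotes the alternating word $\cdots aba$ of length $m$ ending with $a$; the same notation denotes the elements these words represent in a group. The Artin group $A[\Gamma]$ is given by the presentation $\langle S\mid \Pi_R(t,s,m_{s,t})=\Pi_R(s,t,m_{s,t})\text{ for } s\neq t,\ m_{s,t}\neq\infty\rangle$, and the Coxeter group $W[\Gamma]$ is the quotient of $A[\Gamma]$ by the relations $s^2=1$, $s\in S$. The virtual Artin group $VA[\Gamma]$ is the group generated by two sets $\{\sigma_s\mid s\in S\}$ and $\{\tau_s\mid s\in S\}$ in bijection with $S$, subject to the following relations, for all $s,t\in S$ with $s\neq t$ and $m_{s,t}\neq\infty$: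 (v1) $\Pi_R(\sigma_t,\sigma_s,m_{s,t})=\Pi_R(\sigma_s,\sigma_t,m_{s,t})$; (v2) $\Pi_R(\tau_t,\tau_s,m_{s,t})=\Pi_R(\tau_s,\tau_t,m_{s,t})$, together with $\tau_s^2=1$ for all $s\in S$; (v3) $\Pi_R(\tau_s,\tau_t,m_{s,t}-1)\,\sigma_s=\sigma_r\,\Pi_R(\tau_s,\tau_t,m_{s,t}-1)$, where $r=s$ if $m_{s,t}$ is even and $r=t$ if $m_{s,t}$ is odd. We have homomorphisms $\iota_A:A[\Gamma]\to VA[\Gamma]$, $s\mapsto\sigma_s$; $\iota_W:W[\Gamma]\to VA[\Gamma]$, $s\mapsto\tau_s$; $\pi_K:VA[\Gamma]\to W[\Gamma]$, $\sigma_s\mapsto 1$, $\tau_s\mapsto s$; and $\pi_P:VA[\Gamma]\to W[\Gamma]$, $\sigma_s\mapsto s$, $\tau_s\mapsto s$. Set $KVA[\Gamma]=\ker\pi_K$ and $PVA[\Gamma]=\ker\pi_P$. Let $V$ be the real vector space with basis $\{\alpha_s\mid s\in S\}$ (simple roots), with the symmetric bilinear form $\langle\alpha_s,\alpha_t\rangle=-2\cos(\pi/m_{s,t})$ if $m_{s,t}\neq\infty$ and $=-2$ if $m_{s,t}=\infty$. $W[\Gamma]$ acts faithfully on $V$ by $s(v)=v-\langle v,\alpha_s\rangle\alpha_s$. For $w\in W[\Gamma]$ and $g$ in $KVA[\Gamma]$ or $PVA[\Gamma]$ (normal subgroups of $VA[\Gamma]$), write $w\cdot g=\iota_W(w)\,g\,\iota_W(w)^{-1}$.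 Note $\sigma_s\in KVA[\Gamma]$ and $\tau_s\sigma_s\in PVA[\Gamma]$. *)

(* Defs.v *)
From mathcomp Require Import all_boot.
From Stdlib Require Import Reals.

Set Implicit Arguments.
Unset Strict Implicit.
Unset Printing Implicit Defensive.

(** * Coxeter matrices.  [m s t = None] encodes [m_{s,t} = infinity]. *)
Definition coxeter_matrix (S : eqType) (m : S -> S -> option nat) : Prop :=
  (forall s, m s s = Some 1%N) /\
  (forall s t, m s t = m t s) /\
  (forall s t, s <> t ->
     match m s t with Some k => (2 <= k)%N | None => true end).

(** An element of V (real vector space with basis the alpha_s) is represented
    by a finite formal linear combination [l : seq (S * R)] standing for
    sum_{(x,c) in l} c * alpha_x; two such represent the same vector iff
    they have the same coefficient functions [coef]. *)
Definition bform (S : eqType) (m : S -> S -> option nat) (x y : S) : R :=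
  match m x y with
  | Some k => (- 2 * cos (PI / INR k))%R
  | None => (-2)%R
  end.

Definition coef (S : eqType) (l : seq (S * R)) (x : S) : R :=
  foldr (fun p acc => ((if p.1 == x then p.2 else 0) + acc)%R) 0%R l.

Definition form_alpha (S : eqType) (m : S -> S -> option nat)
  (l : seq (S * R)) (s : S) : R :=
  foldr (fun p acc => (p.2 * bform m p.1 s + acc)%R) 0%R l.

Definition refl_act (S : eqType) (m : S -> S -> option nat) (s : S)
  (l : seq (S * R)) : seq (S * R) :=
  l ++ [:: (s, (- form_alpha m l s)%R)].

(** The element of W represented by the word [s1; ...; sk] (= s1 s2 ... sk)
    acts by v |-> s1 (s2 (... (sk v)...)). *)
Definition wact (S : eqType) (m : S -> S -> option nat) (w : seq S)
  (l : seq (S * R)) : seq (S * R) :=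
  foldr (refl_act m) l w.

Definition alpha (S : eqType) (s : S) : seq (S * R) := [:: (s, 1%R)].

Inductive vgen (S : Type) : Type := Sig of S | Tau of S.

(** letters of the free group: (generator, is_inverse) *)
Definition letter (S : Type) : Type := (vgen S * bool)%type.

Definition gen (S : Type) (g : vgen S) : letter S := (g, false).
Definition flip (S : Type) (x : letter S) : letter S := (x.1, ~~ x.2).
Definition winv (S : Type) (w : seq (letter S)) : seq (letter S) :=
  rev (map (@flip S) w).

(** Pi_R(b, a, n): alternating word ... b a b a of length n ending with a. *)
Fixpoint piR (T : Type) (b a : T) (n : nat) : seq T :=
  match n with
  | 0 => [::]
  | n'.+1 => rcons (piR a b n') a
  end.

Inductive va_rel (S : eqType) (m : S -> S -> option nat) :
  seq (letter S) -> seq (letter S) -> Prop :=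
| va_v1 s t k : s <> t -> m s t = Some k ->
    va_rel m (piR (gen (Sig t)) (gen (Sig s)) k) (piR (gen (Sig s)) (gen (Sig t)) k)
| va_v2 s t k : s <> t -> m s t = Some k ->
    va_rel m (piR (gen (Tau t)) (gen (Tau s)) k) (piR (gen (Tau s)) (gen (Tau t)) k)
| va_v2sq s : va_rel m [:: gen (Tau s); gen (Tau s)] [::]
| va_v3 s t k : s <> t -> m s t = Some k ->
    va_rel m (piR (gen (Tau s)) (gen (Tau t)) k.-1 ++ [:: gen (Sig s)])
             (gen (Sig (if odd k then t else s)) :: piR (gen (Tau s)) (gen (Tau t)) k.-1).

(** equality of the elements of VA[Gamma] represented by two words:
    the congruence on words generated by free reduction and the relations. *)
Inductive va_eq (S : eqType) (m : S -> S -> option nat) :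
  seq (letter S) -> seq (letter S) -> Prop :=
| va_refl w : va_eq m w w
| va_sym w1 w2 : va_eq m w1 w2 -> va_eq m w2 w1
| va_trans w1 w2 w3 : va_eq m w1 w2 -> va_eq m w2 w3 -> va_eq m w1 w3
| va_cong x y a b : va_eq m a b -> va_eq m (x ++ a ++ y) (x ++ b ++ y)
| va_free x : va_eq m [:: x; flip x] [::]
| va_relator a b : va_rel m a b -> va_eq m a b.

Definition iotaW (S : Type) (u : seq S) : seq (letter S) :=
  map (fun s => gen (Tau s)) u.

Definition wconj (S : Type) (u : seq S) (g : seq (letter S)) : seq (letter S) :=
  iotaW u ++ g ++ winv (iotaW u).

(* Main.v *)
Require Import Defs.
From mathcomp Require Import all_boot.
From Stdlib Require Import Reals.
From Stdlib Require Import Lra Lia Classical.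
From mathcomp Require Import zify.
Import ssrnat.
Set Implicit Arguments.
Unset Strict Implicit.
Unset Printing Implicit Defensive.

Section LinAlg.
Variable S : eqType.
Variable m : S -> S -> option nat.

Local Notation vec := (seq (prod S R)).
Local Notation form := (form_alpha m).
Implicit Types (x s t a : S) (l : vec) (D : seq S) (w u v : seq S) (c : R).

Definition veq (l1 l2 : vec) := forall x, coef l1 x = coef l2 x.

Lemma veq_refl l : veq l l. Proof. by []. Qed.
Lemma veq_sym l1 l2 : veq l1 l2 -> veq l2 l1. Proof. by move=> h x; rewrite h. Qed.
Lemma veq_trans l1 l2 l3 : veq l1 l2 -> veq l2 l3 -> veq l1 l3.
Proof. by move=> h1 h2 x; rewrite h1 h2. Qed.

Lemma coef_nil x : coef ([::] : vec) x = 0%R. Proof. by []. Qed.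
Lemma coef_cons p l x : coef (p :: l) x = ((if p.1 == x then p.2 else 0) + coef l x)%R.
Proof. by []. Qed.
Lemma coef_cat l1 l2 x : coef (l1 ++ l2) x = (coef l1 x + coef l2 x)%R.
Proof. elim: l1 => [|p l IH] /=; first by rewrite Rplus_0_l. by rewrite IH; ring. Qed.

Lemma form_cons p l s : form (p :: l) s = (p.2 * bform m p.1 s + form l s)%R.
Proof. by []. Qed.
Lemma form_cat l1 l2 s : form (l1 ++ l2) s = (form l1 s + form l2 s)%R.
Proof. elim: l1 => [|p l IH] /=; first by rewrite Rplus_0_l. by rewrite IH; ring. Qed.

Definition sumD (D : seq S) (f : S -> R) : R := foldr (fun x acc => (f x + acc)%R) 0%R D.

Lemma sumD_add D f g : sumD D (fun x => f x + g x)%R = (sumD D f + sumD D g)%R.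
Proof. elim: D => [|x D IH] /=; first ring. rewrite IH; ring. Qed.

Lemma sumD_0 D : sumD D (fun _ => 0%R) = 0%R.
Proof. elim: D => [|x D IH] //=; rewrite IH; ring. Qed.

Lemma sumD_ext D f g : (forall x, f x = g x) -> sumD D f = sumD D g.
Proof. move=> h; elim: D => [|x D IH] //=; by rewrite IH h. Qed.

Lemma sumD_out D (a : S) (f : S -> R) : a \notin D ->
  sumD D (fun x => if a == x then f x else 0%R) = 0%R.
Proof.
elim: D => [|x D IH] //=; rewrite inE negb_or => /andP [ax aD].
by rewrite (negPf ax) IH // Rplus_0_l.
Qed.

Lemma sumD_single D (a : S) (f : S -> R) : uniq D -> a \in D ->
  sumD D (fun x => if a == x then f x else 0%R) = f a.
Proof.
elim: D => [|x D IH] //= /andP [xD uD]; rewrite inE => /orP [/eqP ->|aD].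
  by rewrite eqxx sumD_out // Rplus_0_r.
rewrite IH //; case: eqP => [ax|]; last by rewrite Rplus_0_l.
by move: xD; rewrite -ax aD.
Qed.

Lemma form_sumD l s D : uniq D -> all (fun p => p.1 \in D) l ->
  sumD D (fun x => coef l x * bform m x s)%R = form l s.
Proof.
move=> uD; elim: l => [|p l IH] /=.
  move=> _; rewrite -[RHS](sumD_0 D); apply: sumD_ext => x /=; ring.
move=> /andP [pD lD]; rewrite -IH //.
rewrite -(sumD_single (fun x => p.2 * bform m x s)%R uD pD).
rewrite -sumD_add; apply: sumD_ext => x /=.
case: eqP => _; ring.
Qed.

Lemma form_veq l1 l2 s : veq l1 l2 -> form l1 s = form l2 s.
Proof.
move=> h; set D := undup (map fst (l1 ++ l2)).
have uD : uniq D by exact: undup_uniq.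
have sub : forall l, {subset map fst l <= map fst (l1 ++ l2)} -> all (fun p => p.1 \in D) l.
  elim=> [|p l IH] //= hs; rewrite mem_undup hs ?inE ?eqxx //= IH // => x xl.
  by apply: hs; rewrite inE xl orbT.
rewrite -(form_sumD s uD (sub l1 _)); last by move=> x; rewrite map_cat mem_cat => ->.
rewrite -(form_sumD s uD (sub l2 _)); last by move=> x; rewrite map_cat mem_cat orbC => ->.
by apply: sumD_ext => x; rewrite h.
Qed.

Lemma coef_refl s l x :
  coef (refl_act m s l) x = (coef l x - (if s == x then form l s else 0))%R.
Proof. rewrite /refl_act coef_cat /=; case: eqP => _; ring. Qed.

Lemma form_refl s l t :
  form (refl_act m s l) t = (form l t - form l s * bform m s t)%R.
Proof. rewrite /refl_act form_cat /=; ring. Qed.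

Lemma refl_veq s l1 l2 : veq l1 l2 -> veq (refl_act m s l1) (refl_act m s l2).
Proof. by move=> h x; rewrite !coef_refl h (form_veq s h). Qed.

Lemma wact_veq w l1 l2 : veq l1 l2 -> veq (wact m w l1) (wact m w l2).
Proof. elim: w => [|s w IH] //= h; apply: refl_veq; exact: IH. Qed.

Lemma wact_cat u v l : wact m (u ++ v) l = wact m u (wact m v l).
Proof. by rewrite /wact foldr_cat. Qed.

Lemma wact_rcons u s l : wact m (rcons u s) l = wact m u (refl_act m s l).
Proof. by rewrite -cats1 wact_cat. Qed.

Definition vscale (c : R) (l : vec) : vec := map (fun p => (p.1, c * p.2)%R) l.

Lemma coef_scale c l x : coef (vscale c l) x = (c * coef l x)%R.
Proof. elim: l => [|p l IH] /=; first ring. rewrite IH; case: eqP => _; ring. Qed.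

Lemma form_scale c l s : form (vscale c l) s = (c * form l s)%R.
Proof. elim: l => [|p l IH] /=; first ring. rewrite IH; ring. Qed.

Lemma form_nil s : form [::] s = 0%R. Proof. by []. Qed.

Lemma refl_cat s l1 l2 :
  veq (refl_act m s (l1 ++ l2)) (refl_act m s l1 ++ refl_act m s l2).
Proof. move=> x; rewrite coef_cat !coef_refl coef_cat form_cat; case: eqP => _; ring. Qed.

Lemma refl_scale s c l : veq (refl_act m s (vscale c l)) (vscale c (refl_act m s l)).
Proof. move=> x; rewrite coef_scale !coef_refl coef_scale form_scale; case: eqP => _; ring. Qed.

Lemma wact_catv w l1 l2 : veq (wact m w (l1 ++ l2)) (wact m w l1 ++ wact m w l2).
Proof.
elim: w => [|s w IH] //=; apply: veq_trans (refl_cat _ _ _).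
exact: refl_veq.
Qed.

Lemma wact_scale w c l : veq (wact m w (vscale c l)) (vscale c (wact m w l)).
Proof.
elim: w => [|s w IH] //=; apply: veq_trans (refl_scale _ _ _).
exact: refl_veq.
Qed.

Lemma veq_cat l1 l2 l3 l4 : veq l1 l2 -> veq l3 l4 -> veq (l1 ++ l3) (l2 ++ l4).
Proof. by move=> h1 h2 x; rewrite !coef_cat h1 h2. Qed.

Lemma veq_scale c l1 l2 : veq l1 l2 -> veq (vscale c l1) (vscale c l2).
Proof. by move=> h x; rewrite !coef_scale h. Qed.

Lemma coef_alpha s x : coef (alpha s) x = if s == x then 1%R else 0%R.
Proof. rewrite /alpha /=; case: eqP => _; ring. Qed.

Lemma form_alpha1 s t : form (alpha s) t = bform m s t.
Proof. rewrite /alpha /=; ring. Qed.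

Hypothesis hm : coxeter_matrix m.

Lemma bform_ss s : bform m s s = 2%R.
Proof.
case: hm => h1 _; rewrite /bform h1 /= Rdiv_1_r cos_PI; ring.
Qed.

Lemma bform_sym s t : bform m s t = bform m t s.
Proof. case: hm => _ [h2 _]; by rewrite /bform h2. Qed.

Lemma refl_refl s l : veq (refl_act m s (refl_act m s l)) l.
Proof.
move=> x; rewrite !coef_refl form_refl bform_ss; case: eqP => _; ring.
Qed.

Lemma wact_rev w l : veq (wact m (rev w) (wact m w l)) l.
Proof.
elim: w l => [|s w IH] l //=.
rewrite rev_cons wact_rcons.
apply: veq_trans (IH l); apply: wact_veq; exact: refl_refl.
Qed.

End LinAlg.

Fixpoint UU (c : R) (n : nat) : R * R :=
  match n with
  | 0 => (0%R, 1%R)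
  | n'.+1 => ((UU c n').2, (c * (UU c n').2 - (UU c n').1)%R)
  end.
Definition U c n := (UU c n).1.
Lemma U0 c : U c 0 = 0%R. Proof. by []. Qed.
Lemma U1 c : U c 1 = 1%R. Proof. by []. Qed.
Lemma US c n : U c n.+2 = (c * U c n.+1 - U c n)%R. Proof. by []. Qed.

Section Dihedral.
Variable S : eqType.
Variable m : S -> S -> option nat.
Hypothesis hm : coxeter_matrix m.
Local Notation vec := (seq (prod S R)).
Implicit Types (x s t a b : S) (l : vec) (w u v : seq S) (c : R).

Definition two x (p : R) y (q : R) : vec := [:: (x, p); (y, q)].

Lemma piRS (T : Type) (a b : T) n : piR a b n.+1 = rcons (piR b a n) b.
Proof. by []. Qed.

Lemma dihedral_formula c j0 : forall a b, a != b -> bform m a b = (- c)%R ->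
  veq (wact m (piR a b j0) (alpha a))
      (two (if odd j0 then b else a) (U c j0.+1) (if odd j0 then a else b) (U c j0)).
Proof.
suff: forall j, (forall a b, a != b -> bform m a b = (- c)%R ->
  veq (wact m (piR a b j) (alpha a))
      (two (if odd j then b else a) (U c j.+1) (if odd j then a else b) (U c j))) /\
  (forall a b, a != b -> bform m a b = (- c)%R ->
  veq (wact m (piR a b j.+1) (alpha a))
      (two (if odd j.+1 then b else a) (U c j.+2) (if odd j.+1 then a else b) (U c j.+1))).
  by move=> h; case: (h j0).
elim=> [|j [IH0 IH1]].
  split=> a b ab hab x.
    rewrite /= /U /=; case: eqP => _; case: eqP => _; ring.
  have -> : wact m (piR a b 1) (alpha a) = refl_act m b (alpha a) by [].
  rewrite coef_refl form_alpha1 hab /U /=.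
  case: eqP => _; case: eqP => _; ring.
split; first exact: IH1.
move=> a b ab hab.
have hba : bform m b a = (- c)%R by rewrite (bform_sym hm) hab.
have ba : b != a by rewrite eq_sym.
rewrite piRS wact_rcons.
have e1 : veq (refl_act m b (alpha a)) (alpha a ++ vscale c (alpha b)).
  move=> x; rewrite coef_refl coef_cat coef_scale !coef_alpha form_alpha1 hab.
  case: eqP => _; case: eqP => _; ring.
apply: veq_trans (wact_veq _ _ e1) _.
apply: veq_trans (wact_catv _ _ _ _) _.
apply: veq_trans (veq_cat (veq_refl _) (wact_scale _ _ _ _)) _.
have e2 : veq (wact m (piR b a j.+1) (alpha a))
   (vscale (-1) (two (if odd j then b else a) (U c j.+1) (if odd j then a else b) (U c j))).
  rewrite piRS wact_rcons.
  have e3 : veq (refl_act m a (alpha a)) (vscale (-1) (alpha a)).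
    move=> x; rewrite coef_refl coef_scale coef_alpha form_alpha1 (bform_ss hm).
    case: eqP => _; ring.
  apply: veq_trans (wact_veq _ _ e3) _.
  apply: veq_trans (wact_scale _ _ _ _) _.
  apply: veq_scale; exact: IH0.
have e4 := IH1 b a ba hba.
apply: veq_trans (veq_cat e2 (veq_scale c e4)) _.
move=> x; rewrite coef_cat !coef_scale /two /= negbK !US.
move/negPf: ab => ab.
case: (odd j); case: (a =P x) => [<-|_]; rewrite ?eqxx ?ab ?(eq_sym b a) ?ab /=;
  try case: (b =P x) => _; ring.
Qed.

End Dihedral.

Lemma U_inf j : U 2 j = INR j.
Proof.
suff: U 2 j = INR j /\ U 2 j.+1 = INR j.+1 by case.
elim: j => [|j [h1 h2]]; first by rewrite /U /=; split; ring.
split=> //; rewrite US h1 h2 !S_INR; ring.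
Qed.

Section Trig.
Variable k : nat.
Hypothesis hk : (2 <= k)%N.
Let th := (PI / INR k)%R.

Lemma INRk_pos : (0 < INR k)%R.
Proof. apply: lt_0_INR; apply/ltP; exact: leq_trans hk. Qed.

Lemma th_pos : (0 < th)%R.
Proof. rewrite /th; apply: Rdiv_lt_0_compat; [exact: PI_RGT_0|exact: INRk_pos]. Qed.

Lemma jth_lt j : (j < k)%N -> (INR j * th < PI)%R.
Proof.
move=> jk; rewrite /th.
have hk0 := INRk_pos.
have: (INR j < INR k)%R by apply: lt_INR; apply/ltP.
move=> h; apply (Rmult_lt_reg_r (INR k)) => //.
have -> : (INR j * (PI / INR k) * INR k = INR j * PI)%R by field; lra.
have := PI_RGT_0; nra.
Qed.

Lemma jth_le j : (j <= k)%N -> (INR j * th <= PI)%R.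
Proof.
move=> jk; rewrite /th.
have hk0 := INRk_pos.
have: (INR j <= INR k)%R by apply: le_INR; apply/leP.
move=> h; apply (Rmult_le_reg_r (INR k)) => //.
have -> : (INR j * (PI / INR k) * INR k = INR j * PI)%R by field; lra.
have := PI_RGT_0; nra.
Qed.

Lemma sin_th_pos : (0 < sin th)%R.
Proof.
apply: sin_gt_0; first exact: th_pos.
have := jth_lt (j:=1) hk; rewrite /= Rmult_1_l; lra.
Qed.

Lemma U_sin j : U (2 * cos th) j = (sin (INR j * th) / sin th)%R.
Proof.
have hs := sin_th_pos.
suff: U (2 * cos th) j = (sin (INR j * th) / sin th)%R /\
      U (2 * cos th) j.+1 = (sin (INR j.+1 * th) / sin th)%R by case.
elim: j => [|j [h1 h2]].
  rewrite /U /= Rmult_0_l sin_0 Rmult_1_l; split; field; lra.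
split=> //; rewrite US h1 h2.
have -> : (INR j.+2 * th = INR j.+1 * th + th)%R by rewrite (S_INR j.+1); ring.
have e : (INR j * th = INR j.+1 * th - th)%R by rewrite (S_INR j); ring.
rewrite e sin_plus sin_minus; field; lra.
Qed.

Lemma U_pos j : (0 < j)%N -> (j < k)%N -> (0 < U (2 * cos th) j)%R.
Proof.
move=> j0 jk; rewrite U_sin; apply: Rdiv_lt_0_compat; last exact: sin_th_pos.
apply: sin_gt_0; last exact: jth_lt.
apply: Rmult_lt_0_compat; last exact: th_pos.
apply: lt_0_INR; exact/ltP.
Qed.

Lemma U_ge0 j : (j <= k)%N -> (0 <= U (2 * cos th) j)%R.
Proof.
move=> jk; rewrite U_sin; apply: Rmult_le_pos; last first.
  apply: Rlt_le; apply: Rinv_0_lt_compat; exact: sin_th_pos.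
apply: sin_ge_0; last exact: jth_le.
apply: Rmult_le_pos; [exact: pos_INR | exact: Rlt_le th_pos].
Qed.

Lemma Uk : U (2 * cos th) k = 0%R.
Proof.
rewrite U_sin /th.
have hk0 := INRk_pos.
have -> : (INR k * (PI / INR k) = PI)%R by field; lra.
rewrite sin_PI; rewrite /Rdiv Rmult_0_l; ring.
Qed.

Lemma Ukm1 : U (2 * cos th) k.-1 = 1%R.
Proof.
rewrite U_sin.
have hs := sin_th_pos.
have hk0 := INRk_pos.
have e : INR k = (INR k.-1 + 1)%R.
  rewrite -S_INR prednK //; exact: leq_trans hk.
have -> : (INR k.-1 * th = PI - th)%R by rewrite /th e; field; lra.
rewrite sin_PI_x; field; lra.
Qed.

Lemma Ukp1 : U (2 * cos th) k.+1 = (-1)%R.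
Proof.
rewrite U_sin.
have hs := sin_th_pos.
have hk0 := INRk_pos.
have -> : (INR k.+1 * th = PI + th)%R by rewrite S_INR /th; field; lra.
rewrite sin_plus sin_PI cos_PI; field; lra.
Qed.

End Trig.

Section Braid.
Variable S : eqType.
Variable m : S -> S -> option nat.
Hypothesis hm : coxeter_matrix m.
Local Notation vec := (seq (prod S R)).
Local Notation form := (form_alpha m).
Implicit Types (x s t a b : S) (l z : vec) (w u v : seq S) (c : R).

Definition inst s t := fun x => (x == s) || (x == t).

Lemma all_piR s t n : all (inst s t) (piR s t n) /\ all (inst s t) (piR t s n).
Proof.
elim: n => [|n [h1 h2]] //=; rewrite /= !all_rcons h1 h2 /inst !eqxx orbT /=.
by split.
Qed.

Lemma m_ge2 s t k : s != t -> m s t = Some k -> (2 <= k)%N.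
Proof.
case: hm => _ [_ h3] st e; have := h3 s t; rewrite e; apply; exact/eqP.
Qed.

Lemma bform_some s t k : m s t = Some k -> bform m s t = (- (2 * cos (PI / INR k)))%R.
Proof. by rewrite /bform => ->; ring. Qed.

Lemma braid_alpha s t k : s != t -> m s t = Some k ->
  veq (wact m (piR t s k) (alpha s)) (wact m (piR s t k) (alpha s)).
Proof.
move=> st e; have k2 := m_ge2 st e.
case: k e k2 => [|k] // e k2.
set c := (2 * cos (PI / INR k.+1))%R.
have hb : bform m s t = (- c)%R by rewrite (bform_some e).
apply: veq_trans _ (veq_sym (dihedral_formula hm k.+1 st hb)).
rewrite piRS wact_rcons.
have e3 : veq (refl_act m s (alpha s)) (vscale (-1) (alpha s)).
  move=> x; rewrite coef_refl coef_scale coef_alpha form_alpha1 (bform_ss hm).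
  case: eqP => _; ring.
apply: veq_trans (wact_veq _ _ e3) _.
apply: veq_trans (wact_scale _ _ _ _) _.
apply: veq_trans (veq_scale _ (dihedral_formula hm _ st hb)) _.
have -> : U c k = U c k.+1.-1 by [].
rewrite /c Ukm1 // Uk // Ukp1 //.
move=> x; rewrite coef_scale /two /=.
move/negPf: st => st.
case: (odd k) => /=;
  case: (s =P x) => [<-|_]; rewrite ?eqxx ?st ?(eq_sym t s) ?st /=;
  try case: (t =P x) => _; ring.
Qed.

Lemma fix_orth s t z w : all (inst s t) w -> form z s = 0%R -> form z t = 0%R ->
  veq (wact m w z) z.
Proof.
move=> hw hs ht; elim: w hw => [|a w IH] //= /andP [ha hw].
apply: veq_trans (refl_veq _ _ (IH hw)) _.
move=> x; rewrite coef_refl.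
move: ha; rewrite /inst => /orP [] /eqP ->; rewrite ?hs ?ht; case: eqP => _; ring.
Qed.

Lemma braid_gen s t k w1 w2 : s != t -> m s t = Some k ->
  all (inst s t) w1 -> all (inst s t) w2 ->
  veq (wact m w1 (alpha s)) (wact m w2 (alpha s)) ->
  veq (wact m w1 (alpha t)) (wact m w2 (alpha t)) ->
  forall l, veq (wact m w1 l) (wact m w2 l).
Proof.
move=> st e h1 h2 hs ht l.
have k2 := m_ge2 st e.
set th := (PI / INR k)%R.
set c := (2 * cos th)%R.
have hb : bform m s t = (- c)%R by rewrite (bform_some e).
have hb' : bform m t s = (- c)%R by rewrite (bform_sym hm).
have hsin := sin_th_pos k2.
have hc : (c * c < 4)%R.
  have h := sin2_cos2 th; rewrite /Rsqr in h.
  have hh : (0 < sin th * sin th)%R by apply: Rmult_lt_0_compat.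
  rewrite /c; nra.
set p := form l s; set q := form l t.
set d := (4 - c * c)%R.
set la := ((2 * p + c * q) / d)%R; set mu := ((2 * q + c * p) / d)%R.
set z := l ++ two s (- la) t (- mu).
have zs : form z s = 0%R.
  rewrite /z form_cat /= (bform_ss hm) hb' -/p /la /mu /d; field; lra.
have zt : form z t = 0%R.
  rewrite /z form_cat /= (bform_ss hm) hb -/q /la /mu /d; field; lra.
have el : veq l (z ++ (vscale la (alpha s) ++ vscale mu (alpha t))).
  move=> x; rewrite /z !coef_cat !coef_scale !coef_alpha /=.
  case: eqP => _; case: eqP => _; ring.
have key : forall w, all (inst s t) w -> veq (wact m w l)
    (z ++ (vscale la (wact m w (alpha s)) ++ vscale mu (wact m w (alpha t)))).
  move=> w hw.
  apply: veq_trans (wact_veq _ _ el) _.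
  apply: veq_trans (wact_catv _ _ _ _) _.
  apply: veq_cat; first exact: fix_orth hw zs zt.
  apply: veq_trans (wact_catv _ _ _ _) _.
  apply: veq_cat; exact: wact_scale.
apply: veq_trans (key _ h1) _; apply: veq_trans _ (veq_sym (key _ h2)).
apply: veq_cat => //; apply: veq_cat; exact: veq_scale.
Qed.

Lemma braid_V s t k : s != t -> m s t = Some k ->
  forall l, veq (wact m (piR t s k) l) (wact m (piR s t k) l).
Proof.
move=> st e; apply: (braid_gen st e).
- by case: (all_piR s t k).
- by case: (all_piR s t k).
- exact: braid_alpha.
- apply: veq_sym; apply: braid_alpha; first by rewrite eq_sym.
  by case: hm => _ [h2 _]; rewrite h2.
Qed.

End Braid.

Section Cox.
Variable S : eqType.
Variable m : S -> S -> option nat.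
Hypothesis hm : coxeter_matrix m.
Local Notation vec := (seq (prod S R)).
Implicit Types (s t : S) (l z : vec) (w u v : seq S).

Inductive ceq : seq S -> seq S -> Prop :=
| ceq_refl w : ceq w w
| ceq_sym a b : ceq a b -> ceq b a
| ceq_trans a b c : ceq a b -> ceq b c -> ceq a c
| ceq_cong x a b y : ceq a b -> ceq (x ++ a ++ y) (x ++ b ++ y)
| ceq_sq s : ceq [:: s; s] [::]
| ceq_braid s t k : s <> t -> m s t = Some k -> ceq (piR t s k) (piR s t k).

Lemma size_piR (T : Type) (a b : T) n : size (piR a b n) = n.
Proof. elim: n a b => [|n IH] a b //=; by rewrite size_rcons IH. Qed.

Lemma ceq_odd w1 w2 : ceq w1 w2 -> odd (size w1) = odd (size w2).
Proof.
elim.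
- by [].
- by move=> a b _ ->.
- by move=> a b c _ -> _ ->.
- by move=> x a b y _ h; rewrite !size_cat !oddD h.
- by [].
- by move=> s t k _ _; rewrite !size_piR.
Qed.

Lemma ceq_act w1 w2 : ceq w1 w2 -> forall l, veq (wact m w1 l) (wact m w2 l).
Proof.
elim.
- by [].
- by move=> a b _ h l; apply: veq_sym.
- by move=> a b c _ h1 _ h2 l; apply: veq_trans (h1 l) (h2 l).
- move=> x a b y _ h l; rewrite !wact_cat; apply: wact_veq; exact: h.
- move=> s l /=; exact: refl_refl.
- move=> s t k st e; apply: braid_V => //; exact/eqP.
Qed.

Lemma ceq_cat a a' b b' : ceq a a' -> ceq b b' -> ceq (a ++ b) (a' ++ b').
Proof.
move=> h1 h2; apply: ceq_trans (_ : ceq (a' ++ b) _).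
  have := ceq_cong [::] b h1; by rewrite /= .
have := ceq_cong a' [::] h2; by rewrite /= !cats0.
Qed.

Lemma ceqP0 w : ceq w w. Proof. exact: ceq_refl. Qed.

Lemma map_piR (T1 T2 : Type) (f : T1 -> T2) a b n :
  map f (piR a b n) = piR (f a) (f b) n.
Proof. elim: n a b => [|n IH] a b //=; by rewrite map_rcons IH. Qed.

Local Notation veqv := (va_eq m).

Lemma va_cat a a' b b' : veqv a a' -> veqv b b' -> veqv (a ++ b) (a' ++ b').
Proof.
move=> h1 h2; apply: va_trans (_ : veqv (a' ++ b) _).
  have := va_cong [::] b h1; by rewrite /=.
have := va_cong a' [::] h2; by rewrite /= !cats0.
Qed.

Lemma iotaW_cat u v : iotaW (u ++ v) = iotaW u ++ iotaW v.
Proof. exact: map_cat. Qed.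

Lemma ceq_va w1 w2 : ceq w1 w2 -> veqv (iotaW w1) (iotaW w2).
Proof.
elim.
- move=> w; exact: va_refl.
- move=> a b _ h; exact: va_sym.
- move=> a b c _ h1 _ h2; exact: va_trans h1 h2.
- move=> x a b y _ h; rewrite !iotaW_cat; apply: va_cat; first exact: va_refl.
  apply: va_cat => //; exact: va_refl.
- move=> s; apply: va_relator; exact: va_v2sq.
- move=> s t k st e; rewrite /iotaW !map_piR; apply: va_relator; exact: va_v2.
Qed.

Lemma tau_inv s : veqv [:: (Tau s, true)] [:: gen (Tau s)].
Proof.
apply: va_trans (_ : veqv ([:: gen (Tau s); gen (Tau s)] ++ [:: (Tau s, true)]) _).
  have := va_cong [::] [:: (Tau s, true)] (va_sym (va_relator (va_v2sq m s))).
  by rewrite /=.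
have := va_cong [:: gen (Tau s)] [::] (va_free m (gen (Tau s))).
by rewrite /= .
Qed.

Lemma winv_iotaW u : veqv (winv (iotaW u)) (iotaW (rev u)).
Proof.
elim: u => [|s u IH]; first exact: va_refl.
rewrite /winv /= rev_cons -cats1 rev_cons -cats1 iotaW_cat.
apply: va_cat; first exact: IH.
exact: tau_inv.
Qed.

Lemma iotaW_rev_cancel u : veqv (iotaW u ++ iotaW (rev u)) [::].
Proof.
elim: u => [|s u IH]; first exact: va_refl.
rewrite rev_cons -cats1 iotaW_cat /=.
apply: va_trans (_ : veqv ([:: gen (Tau s)] ++ (iotaW u ++ iotaW (rev u)) ++ iotaW [:: s]) _).
  by rewrite !catA; apply: va_refl.
apply: va_trans (_ : veqv ([:: gen (Tau s)] ++ [::] ++ iotaW [:: s]) _).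
  exact: va_cong.
by apply: va_relator; exact: va_v2sq.
Qed.

End Cox.

Lemma piR_split (T : Type) (a b : T) n q :
  piR a b (n + q) = (if odd q then piR b a n else piR a b n) ++ piR a b q.
Proof.
elim: q a b => [|q IH] a b; first by rewrite addn0 cats0.
rewrite addnS /= IH rcons_cat /=.
by case: (odd q).
Qed.

Lemma classic_min (P : nat -> Prop) n : P n -> exists k, P k /\ forall k', (k' < k)%N -> ~ P k'.
Proof.
suff: forall N n, (n <= N)%N -> P n -> exists k, P k /\ forall k', (k' < k)%N -> ~ P k'.
  by move=> h; exact: (h n n (leqnn _)).
elim=> [|N IH] {}n hn hP.
  exists n; split=> // k'; move: hn; rewrite leqn0 => /eqP ->; by [].
case: (classic (exists k', (k' < n)%N /\ P k')) => [[k' [k'n hk']]|hno].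
  apply: (IH k') => //; rewrite -ltnS; exact: leq_trans k'n hn.
exists n; split=> // k' k'n hk'; apply: hno; by exists k'.
Qed.

Section Red.
Variable S : eqType.
Variable m : S -> S -> option nat.
Hypothesis hm : coxeter_matrix m.
Implicit Types (s t : S) (w u v : seq S).
Local Notation ceq := (ceq m).

Definition red w := forall w', ceq w w' -> (size w <= size w')%N.

Lemma notred w : ~ red w -> exists w', ceq w w' /\ (size w' + 2 <= size w)%N.
Proof.
move=> h.
have [w' [hw hs]] : exists w', ceq w w' /\ (size w' < size w)%N.
  apply: NNPP => hn; apply: h => w' hw; rewrite leqNgt; apply/negP => hs.
  apply: hn; by exists w'.
exists w'; split=> //.
have ho := ceq_odd hw.
rewrite addn2 ltn_neqAle hs andbT.
apply/negP => /eqP he; move: ho; rewrite -he /=; by case: (odd (size w')).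
Qed.

Lemma exists_red w : exists w', ceq w w' /\ red w'.
Proof.
suff: forall N w, (size w <= N)%N -> exists w', ceq w w' /\ red w'.
  by move=> h; exact: (h _ w (leqnn _)).
elim=> [|N IH] {}w hw.
  exists w; split; first exact: ceq_refl.
  by move=> w' _; move: hw; rewrite leqn0 => /eqP ->.
case: (classic (red w)) => hr; first by exists w; split=> //; exact: ceq_refl.
have [w' [hw' hs]] := notred hr.
have [w'' [h1 h2]] : exists w'', ceq w' w'' /\ red w''.
  apply: IH; rewrite -ltnS; apply: leq_trans hw.
  apply: leq_trans _ hs; by rewrite addn2 ltnW.
exists w''; split=> //; exact: ceq_trans hw' h1.
Qed.

Lemma red_infix x a y : red (x ++ a ++ y) -> red a.
Proof.
move=> h a' ha; have := h _ (ceq_cong x y ha).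
by rewrite !size_cat leq_add2l leq_add2r.
Qed.

Lemma red_prefix x y : red (x ++ y) -> red x.
Proof. move=> h; apply: (@red_infix [::] x y); exact: h. Qed.

Lemma red_suffix x y : red (x ++ y) -> red y.
Proof. move=> h; apply: (@red_infix x y [::]); by rewrite cats0. Qed.

Lemma not_red_sq s : ~ red [:: s; s].
Proof. move=> h; have := h _ (ceq_sq m s); by []. Qed.

Lemma red_alt a b z : a != b -> all (inst a b) z -> red (rcons z b) ->
  rcons z b = piR a b (size z).+1.
Proof.
elim/last_ind: z a b => [|z x IH] a b ab hz hr //.
rewrite all_rcons in hz; case/andP: hz => hx hz.
have xa : x = a.
  move: hx; rewrite /inst => /orP [/eqP //|/eqP xb].
  exfalso; apply: (@not_red_sq b).
  apply: (@red_infix z _ [::]); rewrite cats0.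
  by move: hr; rewrite xb -!cats1 -catA.
subst x.
have hr' : red (rcons z a) by apply: (@red_prefix _ [:: b]); rewrite cats1.
have hz' : all (inst b a) z.
  apply/allP => y /(allP hz); rewrite /inst orbC; exact.
rewrite size_rcons (IH b a _ hz' hr') //; by rewrite eq_sym.
Qed.

Lemma not_red_long a b k : a != b -> m a b = Some k -> ~ red (piR a b k.+1).
Proof.
move=> ab e hr.
have k2 := m_ge2 hm ab e.
case: k e k2 hr => [|k] // e k2.
have e' : m b a = Some k.+1 by case: hm => _ [h2 _]; rewrite h2.
have hb : ceq (piR a b k.+1) (piR b a k.+1).
  apply: ceq_braid => //; apply/eqP; by rewrite eq_sym.
have h1 := piR_split a b 1 k.+1.
have h2 := piR_split b a 1 k.
rewrite add1n in h1; rewrite add1n in h2.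
have : ceq (piR a b k.+2) ([:: if odd k then b else a] ++ ([:: if odd k then b else a] ++ piR b a k)).
  rewrite h1; apply: ceq_cat; first by rewrite /=; case: (odd k) => /=; exact: ceq_refl.
  apply: ceq_trans hb _; rewrite h2; case: (odd k) => /=; exact: ceq_refl.
move=> hc hr.
have hc2 := ceq_trans hc (ceq_cong [::] (piR b a k) (ceq_sq m (if odd k then b else a))).
have := hr _ hc2; rewrite /= !size_rcons !size_piR; lia.
Qed.

Lemma red_piR_bound a b k n : a != b -> m a b = Some k -> red (piR a b n) -> (n <= k)%N.
Proof.
move=> ab e hr; rewrite leqNgt; apply/negP => hn.
apply: (not_red_long ab e).
move: hr; rewrite -(subnK hn) piR_split; exact: red_suffix.
Qed.

End Red.

Section Main.
Variable S : eqType.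
Variable m : S -> S -> option nat.
Hypothesis hm : coxeter_matrix m.
Local Notation vec := (seq (prod S R)).
Implicit Types (s t r : S) (l : vec) (w u v y : seq S).
Local Notation ceq := (ceq m).
Local Notation red := (red m).
Local Notation veqv := (va_eq m).

Definition gS s : seq (letter S) := [:: gen (Sig s)].
Definition gH s : seq (letter S) := [:: gen (Tau s); gen (Sig s)].
Definition comm (A B C : seq (letter S)) := veqv (A ++ B) (C ++ A).
Definition VAc w s t := comm (iotaW w) (gS s) (gS t) /\ comm (iotaW w) (gH s) (gH t).

Lemma comm_comp V Y G1 G2 G3 : comm Y G1 G2 -> comm V G2 G3 -> comm (V ++ Y) G1 G3.
Proof.
rewrite /comm => h1 h2.
rewrite -catA; apply: va_trans (va_cat (va_refl _ V) h1) _.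
rewrite catA; apply: va_trans (va_cat h2 (va_refl _ Y)) _.
rewrite -catA; exact: va_refl.
Qed.

Lemma comm_ceq w1 w2 G1 G2 : ceq w1 w2 -> comm (iotaW w1) G1 G2 -> comm (iotaW w2) G1 G2.
Proof.
rewrite /comm => h c; have h' := ceq_va h.
apply: va_trans (va_cat (va_sym h') (va_refl _ _)) _.
apply: va_trans c _; apply: va_cat; [exact: va_refl|exact: h'].
Qed.

Lemma VAc_ceq w1 w2 s t : ceq w1 w2 -> VAc w1 s t -> VAc w2 s t.
Proof. move=> h [h1 h2]; split; exact: comm_ceq h _. Qed.

Lemma dihedral_VA s r k : s != r -> m s r = Some k ->
  VAc (piR s r k.-1) s (if odd k then r else s).
Proof.
move=> sr e; have k2 := m_ge2 hm sr e.
have hS : comm (iotaW (piR s r k.-1)) (gS s) (gS (if odd k then r else s)).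
  rewrite /comm /iotaW map_piR /gS; apply: va_relator.
  apply: va_v3 => //; exact/eqP.
split=> //.
have ht : comm (iotaW (piR s r k.-1)) [:: gen (Tau s)] [:: gen (Tau (if odd k then r else s))].
  rewrite /comm.
  have -> : iotaW (piR s r k.-1) ++ [:: gen (Tau s)] = iotaW (rcons (piR s r k.-1) s).
    by rewrite /iotaW map_rcons cats1.
  have -> : [:: gen (Tau (if odd k then r else s))] ++ iotaW (piR s r k.-1) =
            iotaW ((if odd k then r else s) :: piR s r k.-1) by [].
  apply: ceq_va.
  rewrite -piRS prednK; last exact: leq_trans k2.
  apply: ceq_trans (@ceq_braid _ m s r k _ e) _; first exact/eqP.
  have := piR_split s r 1 k.-1; rewrite add1n prednK; last exact: leq_trans k2.
  move=> ->.
  case: k e k2 {hS} => [|k] // e k2 /=.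
  by case: (odd k) => /=; exact: ceq_refl.
rewrite /comm /gH.
have -> : iotaW (piR s r k.-1) ++ [:: gen (Tau s); gen (Sig s)] =
   (iotaW (piR s r k.-1) ++ [:: gen (Tau s)]) ++ gS s by rewrite -catA.
apply: va_trans (va_cat ht (va_refl _ _)) _.
rewrite -catA; apply: va_trans (va_cat (va_refl _ _) hS) _.
rewrite catA; exact: va_refl.
Qed.

Definition pos l := forall x, (0 <= coef l x)%R.

Lemma two_split (P : S) (a : R) (Q : S) (b : R) : veq (two P a Q b) (vscale a (alpha P) ++ vscale b (alpha Q)).
Proof. move=> x; rewrite coef_cat !coef_scale !coef_alpha /two /=; case: eqP => _; case: eqP => _; ring. Qed.

Lemma main_nil s : pos (alpha s) /\ (forall t, veq (alpha s) (alpha t) -> VAc [::] s t).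
Proof.
split.
  move=> x; rewrite coef_alpha; case: eqP => _; lra.
move=> t h; have := h s; rewrite !coef_alpha eqxx.
case: eqP => [->|_] e; last by exfalso; lra.
by split; rewrite /comm /= ?cats0; apply: va_refl.
Qed.

Theorem main_ind N : forall w, (size w <= N)%N -> red w -> forall s, red (rcons w s) ->
  pos (wact m w (alpha s)) /\ (forall t, veq (wact m w (alpha s)) (alpha t) -> VAc w s t).
Proof.
elim: N => [|N IH] w.
  move=> hw; move: hw; rewrite leqn0 => /nilP -> _ s _; exact: main_nil.
case/lastP: w => [|w0 r] hw hr s hrs; first exact: main_nil.
have rs : r != s.
  apply/eqP => ers; subst r; apply: (@not_red_sq _ m s).
  apply: (@red_infix _ m w0 _ [::]); rewrite cats0.
  by move: hrs; rewrite -!cats1 -catA.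
pose Pair := fun k : nat => exists (v y : seq S), [/\ size v = k, all (inst r s) y,
   ceq (rcons w0 r) (v ++ y) & (size v + size y = size (rcons w0 r))%N].
have P0 : Pair (size w0).
  exists w0, [:: r]; split=> //; first by rewrite /= /inst eqxx.
    by rewrite cats1; exact: ceq_refl.
  by rewrite size_rcons addn1.
have [k0 [[v [y [hv hy hwvy hsz]]] hmin]] := classic_min P0.
have k0le : (k0 <= size w0)%N.
  by rewrite leqNgt; apply/negP => h; exact: hmin _ h P0.
have szw := size_rcons w0 r.
have redv : red v.
  move=> v' hv'; have := hr _ (ceq_trans hwvy (ceq_cat hv' (ceq_refl _ y))).
  rewrite size_cat; lia.
have redvx : forall x, inst r s x -> red (rcons v x).
  move=> x hx; apply: NNPP => hn; have [z [hz hzs]] := notred hn.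
  have hc : ceq (rcons w0 r) (z ++ x :: y).
    apply: ceq_trans hwvy _.
    apply: ceq_trans (_ : ceq _ (rcons v x ++ (x :: y))) _.
      rewrite -cats1 -catA /=; apply: ceq_cat (ceq_refl _ _) _.
      exact: ceq_sym (ceq_cong [::] y (ceq_sq m x)).
    exact: ceq_cat hz (ceq_refl _ _).
  have := hr _ hc; rewrite size_cat /= => hle.
  rewrite size_rcons in hzs.
  apply: (hmin (size z)); first by rewrite -hv; lia.
  exists z, (x :: y); split=> //; first by rewrite /= hx hy.
  rewrite /=; lia.
have redys : red (rcons y s).
  move=> z hz.
  have hc : ceq (rcons (rcons w0 r) s) (v ++ z).
    rewrite -(cats1 (rcons w0 r)).
    apply: ceq_trans (ceq_cat hwvy (ceq_refl _ [:: s])) _.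
    rewrite -catA cats1; exact: ceq_cat (ceq_refl _ _) hz.
  have := hrs _ hc; rewrite !size_rcons size_cat; lia.
have yne : (0 < size y)%N by lia.
have ey : y = piR s r (size y).
  have := red_alt rs hy redys; rewrite piRS => /rcons_inj [] //.
have [j ej] : exists j, size y = j by exists (size y).
rewrite ej in ey yne; subst y.
have hbound : forall k, m r s = Some k -> (j.+1 <= k)%N.
  move=> k e; apply: (red_piR_bound hm rs e); by rewrite piRS.
have IHv : forall x, inst r s x -> pos (wact m v (alpha x)) /\ (forall t, veq (wact m v (alpha x)) (alpha t) -> VAc v x t).
  move=> x hx; apply: IH => //; last exact: redvx.
  rewrite size_rcons in hw; lia.
have sr : s != r by rewrite eq_sym.
set c := (- bform m s r)%R.
have hb : bform m s r = (- c)%R by rewrite /c; ring.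
have df := dihedral_formula hm j sr hb.
set P := if odd j then r else s in df.
set Q := if odd j then s else r in df.
have hP : inst r s P by rewrite /P /inst; case: (odd j); rewrite eqxx ?orbT.
have hQ : inst r s Q by rewrite /Q /inst; case: (odd j); rewrite eqxx ?orbT.
have PQ : P != Q by rewrite /P /Q; case: (odd j); rewrite // eq_sym.
have ew : veq (wact m (rcons w0 r) (alpha s))
   (vscale (U c j.+1) (wact m v (alpha P)) ++ vscale (U c j) (wact m v (alpha Q))).
  apply: veq_trans (ceq_act hm hwvy _) _; rewrite wact_cat.
  apply: veq_trans (wact_veq _ _ df) _.
  apply: veq_trans (wact_veq _ _ (two_split _ _ _ _)) _.
  apply: veq_trans (wact_catv _ _ _ _) _; apply: veq_cat; exact: wact_scale.
have Ufacts : (0 <= U c j.+1)%R /\ (0 < U c j)%R /\ (U c j.+1 = 0%R -> m s r = Some j.+1 /\ U c j = 1%R).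
  case e: (m s r) => [k|].
    have -> : c = (2 * cos (PI / INR k))%R by rewrite /c /bform e; ring.
    have k2 := m_ge2 hm sr e.
    have e' : m r s = Some k by case: hm => _ [h2 _]; rewrite h2.
    have hbk := hbound k e'.
    split; first exact: U_ge0.
    split; first by apply: U_pos => //; lia.
    case: (ltngtP j.+1 k) => hjk; last 1 first.
      by subst k; split=> //; have := Ukm1 k2.
      by move=> h0; have := U_pos k2 (ltn0Sn j) hjk; lra.
    by lia.
  have -> : c = 2%R by rewrite /c /bform e; ring.
  rewrite !U_inf; split; first exact: pos_INR.
  split; first by apply: lt_0_INR; lia.
  move=> h0; have := lt_0_INR j.+1 (Nat.lt_0_succ j); lra.
case: Ufacts => hU1 [hU2 hU3].
have [posP _] := IHv P hP; have [posQ _] := IHv Q hQ.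
split.
  move=> x; rewrite (ew x) coef_cat !coef_scale.
  have := posP x; have := posQ x; nra.
move=> t ht.
have U0' : U c j.+1 = 0%R.
  apply: NNPP => hne; have hA : (0 < U c j.+1)%R by lra.
  set X := wact m v (alpha P); set Y := wact m v (alpha Q).
  have hx : forall x, x != t -> coef X x = 0%R /\ coef Y x = 0%R.
    move=> x xt; have := ht x; rewrite (ew x) coef_cat !coef_scale coef_alpha.
    rewrite eq_sym (negPf xt) => hh.
    have := posP x; have := posQ x; rewrite -/X -/Y => h1 h2.
    rewrite -/X -/Y in hh; split; nra.
  have eX : veq X (vscale (coef X t) (alpha t)).
    move=> x; rewrite coef_scale coef_alpha; case: (t =P x) => [<-|nt]; first ring.
    rewrite (hx x _).1; first ring; by apply/eqP => e; apply: nt.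
  have eY : veq Y (vscale (coef Y t) (alpha t)).
    move=> x; rewrite coef_scale coef_alpha; case: (t =P x) => [<-|nt]; first ring.
    rewrite (hx x _).2; first ring; by apply/eqP => e; apply: nt.
  set beta := wact m (rev v) (alpha t).
  have bX : veq (alpha P) (vscale (coef X t) beta).
    apply: veq_trans (veq_sym (wact_rev hm v (alpha P))) _.
    apply: veq_trans (wact_veq _ _ eX) _; exact: wact_scale.
  have bY : veq (alpha Q) (vscale (coef Y t) beta).
    apply: veq_trans (veq_sym (wact_rev hm v (alpha Q))) _.
    apply: veq_trans (wact_veq _ _ eY) _; exact: wact_scale.
  have := bX P; have := bX Q; have := bY P; have := bY Q.
  rewrite !coef_scale !coef_alpha !eqxx (negPf PQ) eq_sym (negPf PQ).
  nra.
have [emsr Uj1] := hU3 U0'.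
have ewQ : veq (wact m v (alpha Q)) (alpha t).
  move=> x; rewrite -ht (ew x) coef_cat !coef_scale U0' Uj1; ring.
have [VA1 VA2] := (IHv Q hQ).2 t ewQ.
have [D1 D2] := dihedral_VA sr emsr.
have eQ : Q = if odd j.+1 then r else s by rewrite /Q /=; case: (odd j).
rewrite -eQ /= in D1 D2.
apply: (VAc_ceq (ceq_sym hwvy)).
split; rewrite iotaW_cat; [exact: comm_comp D1 VA1 | exact: comm_comp D2 VA2].
Qed.

End Main.

Section Final.
Variable S : eqType.
Variable m : S -> S -> option nat.
Hypothesis hm : coxeter_matrix m.
Implicit Types (s t r : S) (w u v : seq S).
Local Notation ceq := (ceq m).
Local Notation red := (red m).
Local Notation veqv := (va_eq m).

Lemma main_general w s t : veq (wact m w (alpha s)) (alpha t) -> VAc m w s t.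
Proof.
move=> h.
have [w' [hw' redw']] := exists_red m w.
have h' : veq (wact m w' (alpha s)) (alpha t).
  exact: veq_trans (veq_sym (ceq_act hm hw' (alpha s))) h.
have redws : red (rcons w' s).
  apply: NNPP => hn; have [z [hz hzs]] := notred hn.
  have [z' [hz' redz']] := exists_red m z.
  have sz : (size z' <= size z)%N := redz' _ (ceq_sym hz').
  have hc : ceq (rcons z' s) w'.
    rewrite -cats1; apply: ceq_trans (ceq_cat (ceq_sym hz') (ceq_refl _ [:: s])) _.
    apply: ceq_trans (ceq_cat (ceq_sym hz) (ceq_refl _ [:: s])) _.
    rewrite -cats1 -catA /=.
    have := ceq_cong w' [::] (ceq_sq m s); by rewrite /= cats0.
  have redz's : red (rcons z' s).
    move=> q hq; have := redw' _ (ceq_trans (ceq_sym hc) hq).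
    rewrite size_rcons in hzs; rewrite size_rcons; lia.
  have [hpos _] := main_ind hm (leqnn _) redz' redz's.
  have e : veq (wact m w' (alpha s)) (vscale (-1) (wact m z' (alpha s))).
    apply: veq_trans (veq_sym (ceq_act hm hc _)) _.
    rewrite wact_rcons.
    have e3 : veq (refl_act m s (alpha s)) (vscale (-1) (alpha s)).
      move=> x; rewrite coef_refl coef_scale coef_alpha form_alpha1 (bform_ss hm).
      case: eqP => _; ring.
    apply: veq_trans (wact_veq _ _ e3) _; exact: wact_scale.
  have := h' t; rewrite e coef_scale coef_alpha eqxx.
  have := hpos t; lra.
have [_ hva] := main_ind hm (leqnn _) redw' redws.
exact: VAc_ceq (ceq_sym hw') (hva t h').
Qed.

Lemma final_conj u v G1 G2 : comm m (iotaW (rev v ++ u)) G1 G2 ->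
  veqv (iotaW u ++ G1 ++ winv (iotaW u)) (iotaW v ++ G2 ++ winv (iotaW v)).
Proof.
rewrite /comm iotaW_cat => h.
set A := iotaW u; set B := iotaW v; set Bi := iotaW (rev v); set Ai := iotaW (rev u).
apply: va_trans (va_cat (va_refl _ A) (va_cat (va_refl _ G1) (winv_iotaW m u))) _.
have c1 : veqv (A ++ G1 ++ Ai) ((B ++ Bi) ++ A ++ G1 ++ Ai).
  exact: va_cat (va_sym (iotaW_rev_cancel m v)) (va_refl _ _).
apply: va_trans c1 _.
have -> : (B ++ Bi) ++ A ++ G1 ++ Ai = B ++ ((Bi ++ A) ++ G1) ++ Ai by rewrite !catA.
apply: va_trans (va_cat (va_refl _ B) (va_cat h (va_refl _ Ai))) _.
have -> : B ++ (G2 ++ Bi ++ A) ++ Ai = (B ++ G2 ++ Bi) ++ (A ++ Ai) by rewrite !catA.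
apply: va_trans (va_cat (va_refl _ _) (iotaW_rev_cancel m u)) _.
rewrite cats0; apply: va_cat (va_refl _ B) (va_cat (va_refl _ G2) _).
exact: va_sym (winv_iotaW m v).
Qed.

End Final.

Theorem lemma2p2 (S : countType) (m : S -> S -> option nat)
  (hm : coxeter_matrix m) (u v : seq S) (s t : S) :
  (forall x : S, coef (wact m u (alpha s)) x = coef (wact m v (alpha t)) x) ->
  va_eq m (wconj u [:: gen (Sig s)]) (wconj v [:: gen (Sig t)]) /\
  va_eq m (wconj u [:: gen (Tau s); gen (Sig s)])
          (wconj v [:: gen (Tau t); gen (Sig t)]).
Proof.
move=> h.
have hw : veq (wact m (rev v ++ u) (alpha s)) (alpha t).
  rewrite wact_cat; apply: veq_trans (wact_veq _ _ h) _; exact: wact_rev.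
have [h1 h2] := main_general hm hw.
split; [exact: final_conj h1 | exact: final_conj h2].
Qed.
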